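(* Let $\mathcal V$ be a variety (not assumed to be congruence modular). Then $\mathcal V$ is congruence distributive if and only if for every $A\in\mathcal V$ and all $\alpha,\beta,\gamma\in\mathrm{Con}(A)$: (i) $[\alpha,\beta]=\alpha\cap\beta$, and (ii) $[\alpha\vee\beta,\gamma]=[\alpha,\gamma]\vee[\beta,\gamma]$.
   Context: The commutator in an algebra $A$: for $\alpha,\beta\in\mathrm{Con}(A)$, let $M(\alpha,\beta)$ be the set of $2\times 2$ matrices $\begin{pmatrix} t(\mathbf a^1,\mathbf b^1)& t(\mathbf a^1,\mathbf b^2)\\ t(\mathbf a^2,\mathbf b^1)& t(\mathbf a^2,\mathbf b^2)\end{pmatrix}$ where $t$ is an $(m+n)$-ary term, $a^1_i\,\alpha\,a^2_i$ for $i\le m$, $b^1_j\,\beta\,b^2_j$ for $j\le n$; $C(\alpha,\beta;\delta)$ means for every such matrix $t(\mathbf a^1,\mathbf b^1)\,\delta\,t(\mathbf a^1,\mathbf b^2)$ implies $t(\mathbf a^2,\mathbf b^1)\,\delta\,t(\mathbf a^2,\mathbf b^2)$; $[\alpha,\beta]$ is the meet of all $\delta\in\mathrm{Con}(A)$ with $C(\alpha,\beta;\delta)$. A variety is congruence distributive if the congruence lattice of each member is distributive. *)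

(* Defs.v *)
From mathcomp Require Import all_boot.
Set Implicit Arguments. Unset Strict Implicit. Unset Printing Implicit Defensive.

Record signature := Signature { op_sym : Type; arity : op_sym -> nat }.

Record algebra (S : signature) := Algebra {
  carrier :> Type;
  op : forall f : op_sym S, ('I_(arity f) -> carrier) -> carrier }.

Inductive term (S : signature) (V : Type) : Type :=
| Var : V -> term S V
| App : forall f : op_sym S, ('I_(arity f) -> term S V) -> term S V.
Arguments Var {S V}.
Arguments App {S V}.

Fixpoint eval (S : signature) (A : algebra S) (V : Type) (s : V -> A)
  (t : term S V) : A :=
  match t with
  | Var v => s v
  | App f ts => @op S A f (fun i => eval s (ts i))
  end.

(* Varieties as equational classes: the class of models of a set of
   identities in countably many variables. *)
Definition models (S : signature) (E : term S nat * term S nat -> Prop)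
  (A : algebra S) : Prop :=
  forall p, E p -> forall s : nat -> A, eval s p.1 = eval s p.2.

Definition crel (T : Type) := T -> T -> Prop.

Definition rel_eq (T : Type) (R R' : crel T) : Prop :=
  forall x y, R x y <-> R' x y.

Definition is_congruence (S : signature) (A : algebra S) (R : crel A) : Prop :=
  [/\ (forall x, R x x),
      (forall x y, R x y -> R y x),
      (forall x y z, R x y -> R y z -> R x z) &
      (forall f (xs ys : 'I_(arity f) -> A),
          (forall i, R (xs i) (ys i)) -> R (@op S A f xs) (@op S A f ys))].
Arguments is_congruence {S} A R.

Definition con_meet (T : Type) (R R' : crel T) : crel T :=
  fun x y => R x y /\ R' x y.

Definition con_join (S : signature) (A : algebra S) (R R' : crel A) : crel A :=
  fun x y => forall D : crel A, is_congruence A D ->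
    (forall u v, R u v -> D u v) -> (forall u v, R' u v -> D u v) -> D x y.
Arguments con_join {S} A R R'.

Definition mix (T : Type) (m n : nat) (a : 'I_m -> T) (b : 'I_n -> T)
  (v : 'I_m + 'I_n) : T :=
  match v with inl i => a i | inr j => b j end.

Definition centralizes (S : signature) (A : algebra S) (al be de : crel A) : Prop :=
  forall (m n : nat) (t : term S ('I_m + 'I_n))
         (a1 a2 : 'I_m -> A) (b1 b2 : 'I_n -> A),
    (forall i, al (a1 i) (a2 i)) -> (forall j, be (b1 j) (b2 j)) ->
    de (eval (mix a1 b1) t) (eval (mix a1 b2) t) ->
    de (eval (mix a2 b1) t) (eval (mix a2 b2) t).
Arguments centralizes {S} A al be de.

Definition commutator (S : signature) (A : algebra S) (al be : crel A) : crel A :=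
  fun x y => forall D : crel A, is_congruence A D -> centralizes A al be D -> D x y.
Arguments commutator {S} A al be.

Definition congruence_distributive (S : signature) (K : algebra S -> Prop) : Prop :=
  forall A : algebra S, K A ->
  forall al be ga : crel A,
    is_congruence A al -> is_congruence A be -> is_congruence A ga ->
    rel_eq (con_meet al (con_join A be ga))
           (con_join A (con_meet al be) (con_meet al ga)).

(* Main.v *)
Require Import Defs.
From mathcomp Require Import all_boot.
From Stdlib Require Import Relations FunctionalExtensionality ProofIrrelevance ClassicalEpsilon.
Set Implicit Arguments. Unset Strict Implicit. Unset Printing Implicit Defensive.

Lemma join_cong (S : signature) (A : algebra S) (R R' : crel A) :
  is_congruence A (con_join A R R').
Proof.
split.
- by move=> x D [H _ _ _].
- by move=> x y H D HD HR HR'; case: (HD) => _ Hs _ _; apply: Hs; apply: H.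
- move=> x y z H1 H2 D HD HR HR'; case: (HD) => _ _ Ht _.
  by apply: Ht (H1 D HD HR HR') (H2 D HD HR HR').
- move=> f xs ys H D HD HR HR'; case: (HD) => _ _ _ Hc.
  by apply: Hc => i; apply: H.
Qed.

Lemma join_ext (S : signature) (A : algebra S) (R1 R2 R1' R2' : crel A) :
  rel_eq R1 R2 -> rel_eq R1' R2' ->
  rel_eq (con_join A R1 R1') (con_join A R2 R2').
Proof.
move=> H H' x y; split => J D HD HR HR'; apply: J => // u v.
- by move/H; apply: HR.
- by move/H'; apply: HR'.
- by move/H; apply: HR.
- by move/H'; apply: HR'.
Qed.

Lemma join_ub (S : signature) (A : algebra S) (R R' : crel A) x y :
  R x y -> con_join A R R' x y.
Proof. by move=> H D _ HR _; apply: HR. Qed.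

Lemma join_ub' (S : signature) (A : algebra S) (R R' : crel A) x y :
  R' x y -> con_join A R R' x y.
Proof. by move=> H D _ _ HR; apply: HR. Qed.

Lemma eval_compat (S : signature) (A : algebra S) (R : crel A) (V : Type)
  (s s' : V -> A) (t : term S V) :
  is_congruence A R -> (forall v, R (s v) (s' v)) -> R (eval s t) (eval s' t).
Proof.
move=> [_ _ _ Hc] Hs; elim: t => [v|f ts IH] /=; first exact: Hs.
by apply: Hc.
Qed.

Lemma comm_le_meet (S : signature) (A : algebra S) (al be : crel A) x y :
  is_congruence A al -> is_congruence A be ->
  commutator A al be x y -> con_meet al be x y.
Proof.
move=> Hal Hbe H; split; apply: H => //.
- move=> m n t a1 a2 b1 b2 Ha Hb H1.
  case: (Hal) => Hr Hs Ht _.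
  have E1 : forall b, al (eval (mix a1 b) t) (eval (mix a2 b) t).
    by move=> b; apply: eval_compat => // -[i|j] /=; [apply: Ha | apply: Hr].
  apply: (Ht) (Hs _ _ (E1 b1)) _; apply: (Ht) H1 (E1 b2).
- move=> m n t a1 a2 b1 b2 Ha Hb _.
  by apply: eval_compat => // -[i|j] /=; [case: Hbe => Hr _ _ _ | apply: Hb].
Qed.

Definition tc (T : Type) (R1 R2 : crel T) : crel T :=
  clos_refl_trans T (fun x y => R1 x y \/ R2 x y).

Definition upd (T : Type) (k : nat) (w : 'I_k -> T) (j : 'I_k) (u : T) : 'I_k -> T :=
  fun i => if i == j then u else w i.

Lemma tc_upd (S : signature) (A : algebra S) (R1 R2 : crel A) f
  (w : 'I_(arity f) -> A) j u v :
  is_congruence A R1 -> is_congruence A R2 ->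
  tc R1 R2 u v -> tc R1 R2 (@op _ A f (upd w j u)) (@op _ A f (upd w j v)).
Proof.
move=> [r1 _ _ c1] [r2 _ _ c2]; elim=> {u v} [u v [H|H]| u | u v z _ IH1 _ IH2].
- apply: rt_step; left; apply: c1 => i; rewrite /upd; case: (i == j) => //.
- apply: rt_step; right; apply: c2 => i; rewrite /upd; case: (i == j) => //.
- exact: rt_refl.
- exact: rt_trans IH1 IH2.
Qed.

Lemma tc_cong (S : signature) (A : algebra S) (R1 R2 : crel A) :
  is_congruence A R1 -> is_congruence A R2 -> is_congruence A (tc R1 R2).
Proof.
move=> H1 H2; split.
- by move=> x; apply: rt_refl.
- move=> x y; elim=> {x y} [x y [H|H]| x | x y z _ IH1 _ IH2].
  + by apply: rt_step; left; case: H1 => _ s _ _; apply: s.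
  + by apply: rt_step; right; case: H2 => _ s _ _; apply: s.
  + exact: rt_refl.
  + exact: rt_trans IH2 IH1.
- by move=> x y z; apply: rt_trans.
- move=> f xs ys H.
  pose zs k := fun i : 'I_(arity f) => if (i < k)%N then ys i else xs i.
  have main : forall k, tc R1 R2 (@op _ A f xs) (@op _ A f (zs k)).
    elim=> [|k IH].
      have -> : zs 0 = xs by apply: functional_extensionality => i.
      exact: rt_refl.
    case: (ltnP k (arity f)) => Hk.
      pose j := Ordinal Hk.
      have E1 : zs k = upd (zs k) j (xs j).
        apply: functional_extensionality => i; rewrite /upd /zs.
        case: eqP => [->|] //=; by rewrite ltnn.
      have E2 : zs k.+1 = upd (zs k) j (ys j).
        apply: functional_extensionality => i; rewrite /upd /zs ltnS.
        case: eqP => [->|ne] /=; first by rewrite leqnn.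
        rewrite leq_eqVlt; case: eqP => //= e; case: ne; exact: val_inj.
      apply: rt_trans IH _; rewrite {1}E1 E2; apply: tc_upd => //; exact: H.
    have -> : zs k.+1 = zs k.
      apply: functional_extensionality => i; rewrite /zs.
      have h1 : (i < k)%N by apply: leq_trans (ltn_ord i) Hk.
      by rewrite h1 ltnS (ltnW h1).
    exact: IH.
  have -> : ys = zs (arity f).
    by apply: functional_extensionality => i; rewrite /zs ltn_ord.
  exact: main.
Qed.

Lemma join_le_tc (S : signature) (A : algebra S) (R1 R2 : crel A) x y :
  is_congruence A R1 -> is_congruence A R2 ->
  con_join A R1 R2 x y -> tc R1 R2 x y.
Proof.
move=> H1 H2 J; apply: J; first exact: tc_cong.
- by move=> u v h; apply: rt_step; left.
- by move=> u v h; apply: rt_step; right.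
Qed.

Definition v2 (T : Type) (x y : T) : 'I_2 -> T :=
  fun i => if nat_of_ord i == 0 then x else y.
Definition v1 (T : Type) (z : T) : 'I_1 -> T := fun _ => z.
Definition ev3 (S : signature) (A : algebra S) (t : term S ('I_2 + 'I_1)) (x y z : A) : A :=
  eval (mix (v2 x y) (v1 z)) t.

Definition Fcar (S : signature) (A : algebra S) :=
  {f : A -> A -> A -> A | exists t, forall x y z, f x y z = ev3 t x y z}.

Lemma Fop_ok (S : signature) (A : algebra S) (f : op_sym S)
  (fs : 'I_(arity f) -> Fcar A) :
  exists t, forall x y z,
    @op _ A f (fun i => sval (fs i) x y z) = ev3 t x y z.
Proof.
exists (App f (fun i => proj1_sig (constructive_indefinite_description _ (proj2_sig (fs i))))).
move=> x y z; rewrite /ev3 /=; congr (@op _ A f _).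
apply: functional_extensionality => i.
exact: (proj2_sig (constructive_indefinite_description _ (proj2_sig (fs i)))).
Qed.

Definition FA (S : signature) (A : algebra S) : algebra S :=
  @Algebra S (Fcar A) (fun f fs => exist _ _ (Fop_ok fs)).

Lemma Fcar_eq (S : signature) (A : algebra S) (u v : FA A) : sval u = sval v -> u = v.
Proof.
case: u => fu pu; case: v => fv pv /= e; subst fv.
by rewrite (proof_irrelevance _ pu pv).
Qed.

Lemma F_eval (S : signature) (A : algebra S) (V : Type) (s : V -> FA A) (t : term S V) x y z :
  sval (eval s t) x y z = eval (fun v => sval (s v) x y z) t.
Proof.
elim: t => [v|f ts IH] //=; congr (@op _ A f _).
by apply: functional_extensionality => i; apply: IH.
Qed.

Lemma F_models (S : signature) E (A : algebra S) : models E A -> models E (FA A).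
Proof.
move=> HA p Ep s; apply: Fcar_eq.
apply: functional_extensionality => x; apply: functional_extensionality => y.
apply: functional_extensionality => z.
by rewrite !F_eval; apply: HA.
Qed.

Definition Kgen (S : signature) (A : algebra S) (px py pz : A -> A -> A) : crel (FA A) :=
  fun u v => forall a c, sval u (px a c) (py a c) (pz a c) = sval v (px a c) (py a c) (pz a c).

Lemma Kgen_cong (S : signature) (A : algebra S) px py pz : is_congruence (FA A) (Kgen px py pz).
Proof.
split.
- by [].
- by move=> u v h a c; rewrite h.
- by move=> u v w h1 h2 a c; rewrite h1 h2.
- move=> f xs ys h a c /=; congr (@op _ A f _).
  by apply: functional_extensionality => i; apply: h.
Qed.

Lemma meet_cong (S : signature) (A : algebra S) (R R' : crel A) :
  is_congruence A R -> is_congruence A R' -> is_congruence A (con_meet R R').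
Proof.
move=> [r1 s1 t1 c1] [r2 s2 t2 c2]; split.
- by move=> x; split.
- by move=> x y [h h']; split; [apply: s1 | apply: s2].
- by move=> x y z [h h'] [g g']; split; [apply: t1 h g | apply: t2 h' g'].
- by move=> f xs ys h; split; [apply: c1 => i; case: (h i) | apply: c2 => i; case: (h i)].
Qed.

Lemma C3 (S : signature) (A : algebra S) (al be D : crel A) :
  is_congruence A al -> centralizes A al be D ->
  forall t x1 y1 x2 y2 z1 z2, al x1 x2 -> al y1 y2 -> be z1 z2 ->
  D (ev3 t x1 y1 z1) (ev3 t x1 y1 z2) -> D (ev3 t x2 y2 z1) (ev3 t x2 y2 z2).
Proof.
move=> Hal HC t x1 y1 x2 y2 z1 z2 h1 h2 h3.
by apply: (HC 2 1 t (v2 x1 y1) (v2 x2 y2) (v1 z1) (v1 z2)) => [i|j]; rewrite /v2 /v1 //; case: ifP.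
Qed.

Lemma FX_ok (S : signature) (A : algebra S) :
  exists t, forall x y z : A, x = ev3 t x y z.
Proof. by exists (Var (inl ord0)). Qed.
Lemma FY_ok (S : signature) (A : algebra S) :
  exists t, forall x y z : A, y = ev3 t x y z.
Proof. by exists (Var (inl (@Ordinal 2 1 erefl))). Qed.
Lemma FZ_ok (S : signature) (A : algebra S) :
  exists t, forall x y z : A, z = ev3 t x y z.
Proof. by exists (Var (inr ord0)). Qed.
Definition FX (S : signature) (A : algebra S) : FA A :=
  exist _ (fun x y z => x) (FX_ok A).
Definition FY (S : signature) (A : algebra S) : FA A :=
  exist _ (fun x y z => y) (FY_ok A).
Definition FZ (S : signature) (A : algebra S) : FA A :=
  exist _ (fun x y z => z) (FZ_ok A).

Lemma meet_le_comm (S : signature) E (CD : congruence_distributive (models E))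
  (A : algebra S) (HA : models E A) (al be : crel A) :
  is_congruence A al -> is_congruence A be ->
  forall a b, al a b -> be a b -> commutator A al be a b.
Proof.
move=> Hal Hbe a b hab hbab D HD HC.
case: (Hal) => ar asy _ _; case: (Hbe) => br _ _ _.
pose Kxy := @Kgen S A (fun a c => a) (fun a c => a) (fun a c => c).
pose Kyz := @Kgen S A (fun a c => a) (fun a c => c) (fun a c => c).
pose Kxz := @Kgen S A (fun a c => a) (fun a c => c) (fun a c => a).
have J : con_meet Kxz (con_join (FA A) Kxy Kyz) (FX A) (FZ A).
  split; first by [].
  move=> D' [_ _ t' _] h1 h2; apply: t' (h1 _ (FY A) _) (h2 _ _ _) => //.
have := (CD (FA A) (F_models HA) Kxz Kxy Kyz (Kgen_cong _ _ _) (Kgen_cong _ _ _)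
          (Kgen_cong _ _ _) (FX A) (FZ A)).1 J.
move/join_le_tc => T.
have {}T := T (meet_cong (Kgen_cong _ _ _) (Kgen_cong _ _ _))
              (meet_cong (Kgen_cong _ _ _) (Kgen_cong _ _ _)).
have key : forall u : FA A, Kxz u (FX A) ->
    (D a (sval u a b b) <-> D a (sval u a a b)).
  move=> [f [t ft]] /= hu; have ea : forall y, ev3 t a y a = a.
    by move=> y; rewrite -ft; apply: (hu a y).
  rewrite !ft; split => h.
  - have := C3 Hal HC (t:=t) (ar a) (asy _ _ hab) hbab.
    by rewrite !ea; apply.
  - have := C3 Hal HC (t:=t) (ar a) hab hbab.
    by rewrite !ea; apply.
pose Inv (u : FA A) := Kxz u (FX A) /\ D a (sval u a b b).
have step : forall u v, tc (con_meet Kxz Kxy) (con_meet Kxz Kyz) u v -> Inv u -> Inv v.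
  move=> u v; elim=> {u v} [u v [[h1 h2]|[h1 h2]] | u | u v w _ IH1 _ IH2] //; last first.
  - by move=> /IH1 /IH2.
  - move=> [hu hd]; split; first by move=> x c; rewrite -h1 hu.
    by rewrite -(h2 a b).
  - move=> [hu hd]; split; first by move=> x c; rewrite -h1 hu.
    have hv : Kxz v (FX A) by move=> x c; rewrite -h1 hu.
    by apply/(key v hv); rewrite -(h2 a b); apply/(key u hu).
case: (HD) => dr _ _ _.
by have [_ ] := step _ _ T (conj (fun _ _ => erefl) (dr a)).
Qed.

Lemma meetC (T : Type) (R R' : crel T) : rel_eq (con_meet R R') (con_meet R' R).
Proof. by move=> x y; split => -[]. Qed.

Theorem theorem6p1 (S : signature) (E : term S nat * term S nat -> Prop) :
  congruence_distributive (models E) <->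
  (forall A : algebra S, models E A ->
   forall al be ga : crel A,
     is_congruence A al -> is_congruence A be -> is_congruence A ga ->
     rel_eq (commutator A al be) (con_meet al be) /\
     rel_eq (commutator A (con_join A al be) ga)
            (con_join A (commutator A al ga) (commutator A be ga))).
Proof.
split.
- move=> CD A HA.
  have ceq : forall X Y : crel A, is_congruence A X -> is_congruence A Y ->
      rel_eq (commutator A X Y) (con_meet X Y).
    move=> X Y hX hY x y; split; first exact: comm_le_meet.
    by case=> h1 h2; apply: (meet_le_comm CD HA hX hY).
  move=> al be ga hal hbe hga; split; first exact: ceq.
  move=> x y.
  have e1 := ceq _ _ (join_cong al be) hga x y.
  have e2 := join_ext (ceq _ _ hal hga) (ceq _ _ hbe hga) x y.
  have e3 := CD A HA ga al be hga hal hbe x y.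
  have e4 := join_ext (meetC ga al) (meetC ga be) x y.
  have e5 := meetC (con_join A al be) ga x y.
  tauto.
- move=> H A HA al be ga hal hbe hga x y.
  have e1 := (H A HA _ _ al (join_cong be ga) hal hal).1 x y.
  have e2 := (H A HA be ga al hbe hga hal).2 x y.
  have e3 := join_ext ((H A HA be al al hbe hal hal).1) ((H A HA ga al al hga hal hal).1) x y.
  have e4 := join_ext (meetC be al) (meetC ga al) x y.
  have e5 := meetC al (con_join A be ga) x y.
  tauto.
Qed.
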